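(* Suppose $X=\{0,1\}^n$, $R(X)=[0,1]^n$, and $Q:[0,1]^n \to \mathbb{R}$ is an extension of $Q'$ which is component-wise monotone on $[0,1]^n$, i.e., for each $i \in [n]$, $Q$ is either nondecreasing in $x_i$ or nonincreasing in $x_i$ (with the other coordinates fixed). Let $I \subseteq [n]$ be nonempty and let $\mu\in\mathbb{R}^n$, $\eta\in\mathbb{R}$ with $\mu_i=0$ for all $i\notin I$. Then the inequality $\theta\geq \mu^T \mathbf{x}+\eta$ is valid for $E=\{(\theta,\mathbf{x})\in\mathbb{R}\times X:\theta\geq Q'(\mathbf{x})\}$ if and only if it is valid for $E_I^Q$.
   Context: $Q':\{0,1\}^n\to\mathbb{R}$ is a function, and $Q$ is an extension of $Q'$ to $[0,1]^n$, i.e., $Q(\mathbf{x})=Q'(\mathbf{x})$ for $\mathbf{x}\in\{0,1\}^n$. Let $E^Q := \{(\theta,\mathbf{x}) \in \mathbb{R}\times [0,1]^n : \theta \geq Q(\mathbf{x})\}$. For $I \subseteq [n]$ and $\chi \in \{0,1\}^I$, $E_I^Q(\chi) := \{(\theta,\mathbf{x}) \in E^Q : \mathbf{x}_I = \chi\}$ and $E_I^Q := \bigcup_{\chi \in \{0,1\}^I} E_I^Q(\chi)$, where $\mathbf{x}_I$ is the subvector of $\mathbf{x}$ indexed by $I$. *)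

(* Defs.v *)
From mathcomp Require Import all_boot all_order all_algebra.
Set Implicit Arguments. Unset Strict Implicit. Unset Printing Implicit Defensive.
Import Order.TTheory GRing.Theory Num.Theory.
Local Open Scope ring_scope.

Section Defs.
Variables (R : realFieldType) (n : nat).

Definition in_unit_cube (x : 'I_n -> R) : Prop := forall i, 0 <= x i <= 1.

Definition bin_pt (b : 'I_n -> bool) : 'I_n -> R := fun i => (b i)%:R.

Definition upd (x : 'I_n -> R) (i : 'I_n) (t : R) : 'I_n -> R :=
  fun j => if j == i then t else x j.

Definition nondecr_in (Q : ('I_n -> R) -> R) (i : 'I_n) : Prop :=
  forall x, in_unit_cube x -> forall s t, 0 <= s -> s <= t -> t <= 1 ->
    Q (upd x i s) <= Q (upd x i t).

Definition nonincr_in (Q : ('I_n -> R) -> R) (i : 'I_n) : Prop :=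
  forall x, in_unit_cube x -> forall s t, 0 <= s -> s <= t -> t <= 1 ->
    Q (upd x i t) <= Q (upd x i s).

Definition componentwise_monotone (Q : ('I_n -> R) -> R) : Prop :=
  forall i, nondecr_in Q i \/ nonincr_in Q i.

Definition E_set (Q' : ('I_n -> bool) -> R) (theta : R) (x : 'I_n -> R) : Prop :=
  exists b, x = bin_pt b /\ Q' b <= theta.

(* E^Q_I = union over chi in {0,1}^I of E^Q_I(chi)
   = {(theta,x) in R x [0,1]^n : theta >= Q(x), x_i in {0,1} for i in I} *)
Definition EQ_I (Q : ('I_n -> R) -> R) (I : {set 'I_n})
    (theta : R) (x : 'I_n -> R) : Prop :=
  [/\ in_unit_cube x, Q x <= theta &
      exists chi : 'I_n -> bool, forall i, i \in I -> x i = (chi i)%:R].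

Definition valid_ineq (S : R -> ('I_n -> R) -> Prop) (mu : 'I_n -> R) (eta : R)
  : Prop := forall theta x, S theta x -> \sum_i mu i * x i + eta <= theta.

End Defs.
Arguments bin_pt {R n} b i.
Arguments in_unit_cube {R n} x.
Arguments upd {R n} x i t j.
Arguments componentwise_monotone {R n} Q.
Arguments E_set {R n} Q' theta x.
Arguments EQ_I {R n} Q I theta x.
Arguments valid_ineq {R n} S mu eta.

(* Main.v *)
Require Import Defs.
From mathcomp Require Import all_boot all_order all_algebra.
From Stdlib Require Import FunctionalExtensionality.
Import Order.TTheory GRing.Theory Num.Theory.
Local Open Scope ring_scope.

Lemma upd_same (R : realFieldType) n (y : 'I_n -> R) i : upd y i (y i) = y.
Proof. apply: functional_extensionality => j; rewrite /upd; by case: eqP => [->|]. Qed.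

Lemma round_lemma (R : realFieldType) n (Q : ('I_n -> R) -> R)
  (Hmono : componentwise_monotone Q) (s : seq 'I_n) :
  forall x, in_unit_cube x -> exists y, [/\ in_unit_cube y, Q y <= Q x,
     (forall i, i \in s -> y i = 0 \/ y i = 1) &
     (forall i, i \notin s -> y i = x i)].
Proof.
elim: s => [|i s IH] x Hx.
  by exists x; split.
have [y [Hy HQ Hs Hn]] := IH x Hx.
have updcube : forall t : R, 0 <= t <= 1 -> in_unit_cube (upd y i t).
  move=> t Ht j; rewrite /upd; case: eqP => _ //; exact: Hy.
have Hyi := Hy i; case/andP: Hyi => Hyi0 Hyi1.
case: (Hmono i) => Hm.
- exists (upd y i 0); split.
  + by apply: updcube; rewrite lexx ler01.
  + apply: le_trans HQ; rewrite -{2}(@upd_same R n y i); exact: Hm.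
  + move=> j; rewrite inE /upd; case: eqP => [_|_] /=; first by left.
    exact: Hs.
  + move=> j; rewrite inE negb_or /upd => /andP [Hji Hjs].
    by rewrite (negbTE Hji); exact: Hn.
- exists (upd y i 1); split.
  + by apply: updcube; rewrite lexx ler01.
  + apply: le_trans HQ; rewrite -{2}(@upd_same R n y i); exact: Hm.
  + move=> j; rewrite inE /upd; case: eqP => [_|_] /=; first by right.
    exact: Hs.
  + move=> j; rewrite inE negb_or /upd => /andP [Hji Hjs].
    by rewrite (negbTE Hji); exact: Hn.
Qed.

Theorem corollary1 (R : realFieldType) (n : nat)
    (Q' : ('I_n -> bool) -> R) (Q : ('I_n -> R) -> R)
    (Hext : forall b, Q (bin_pt (R:=R) b) = Q' b)
    (Hmono : componentwise_monotone Q)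
    (I : {set 'I_n}) (HI : I != set0)
    (mu : 'I_n -> R) (eta : R)
    (Hmu : forall i, i \notin I -> mu i = 0) :
  valid_ineq (E_set Q') mu eta <-> valid_ineq (EQ_I Q I) mu eta.
Proof.
split.
- move=> HE theta x [Hx HQ [chi Hchi]].
  have [y [Hy HQy Hs Hn]] := @round_lemma R n Q Hmono (enum (~: I)) x Hx.
  have ybin : forall i, y i = 0 \/ y i = 1.
    move=> i; case: (boolP (i \in I)) => Hi.
    + rewrite Hn; last by rewrite mem_enum inE Hi.
      by rewrite Hchi //; case: (chi i); [right|left].
    + by apply: Hs; rewrite mem_enum inE.
  set b := fun i => y i == 1.
  have yb : y = bin_pt b.
    apply: functional_extensionality => i; rewrite /bin_pt /b.
    by case: (ybin i) => ->; rewrite ?eqxx // eq_sym oner_eq0.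
  have Hsum : \sum_i mu i * x i = \sum_i mu i * y i.
    apply: eq_bigr => i _; case: (boolP (i \in I)) => Hi.
    + by rewrite Hn // mem_enum inE Hi.
    + by rewrite Hmu // !mul0r.
  rewrite Hsum.
  have := HE (Q' b) y; rewrite /E_set => H.
  apply: le_trans (H _) _; first by exists b; split.
  by rewrite -Hext -yb (le_trans HQy HQ).
- move=> HE theta x [b [-> Hb]]; apply: HE; split.
  + by move=> i; rewrite /bin_pt; case: (b i); rewrite /= ?lexx ?ler01.
  + by rewrite Hext.
  + by exists b.
Qed.
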